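(* Let $T:\mathrm{PSym}(3)\to\mathrm{Sym}(3)$ satisfy Axioms (A0.1), (A0.2), (A0.3), (A1) and (A3). Then there exists $c\in\mathbb R$ such that for all $\alpha>0$ $$T\big(\mathrm{diag}(\alpha,\alpha^{-1},1)\big)=c\,\log\mathrm{diag}(\alpha,\alpha^{-1},1)=c\,\mathrm{diag}(\ln\alpha,-\ln\alpha,0).$$
   Context: $\mathrm{Sym}(3)$: real symmetric $3\times3$ matrices; $\mathrm{PSym}(3)$: symmetric positive definite ones; $\mathbb 1$: identity; $\mathrm{O}(3)$: orthogonal group; $\log$ is the principal matrix logarithm $\mathrm{PSym}(3)\to\mathrm{Sym}(3)$; coaxial means commuting. Axiom (A0.1): $T$ continuous. Axiom (A0.2): $T(U)=0$ iff $U=\mathbb 1$. Axiom (A0.3): $T(Q^TUQ)=Q^TT(U)Q$ for all $Q\in\mathrm O(3)$. Axiom (A1): for every $\alpha>0$ there is $s\in\mathbb R$ such that for all $U\in\mathrm{PSym}(3)$: $U=\mathrm{diag}(\alpha,\alpha^{-1},1)$ if and only if $T(U)=\mathrm{diag}(s,-s,0)$. Axiom (A3): $T(U_1U_2)=T(U_1)+T(U_2)$ for all coaxial $U_1,U_2\in\mathrm{PSym}(3)$. *)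

(* Defs.v *)
From Stdlib Require Import Reals Lra.
Open Scope R_scope.

Inductive I3 : Type := i0 | i1 | i2.

Definition Mat3 := I3 -> I3 -> R.
Definition Vec3 := I3 -> R.

Definition sum3 (f : I3 -> R) : R := f i0 + f i1 + f i2.

Definition mmul (A B : Mat3) : Mat3 := fun i j => sum3 (fun k => A i k * B k j).
Definition mtr (A : Mat3) : Mat3 := fun i j => A j i.
Definition madd (A B : Mat3) : Mat3 := fun i j => A i j + B i j.
Definition mscale (c : R) (A : Mat3) : Mat3 := fun i j => c * A i j.
Definition mzero : Mat3 := fun _ _ => 0.

Definition diag3 (a b c : R) : Mat3 := fun i j =>
  match i, j with
  | i0, i0 => a
  | i1, i1 => b
  | i2, i2 => c
  | _, _ => 0
  end.

Definition mid : Mat3 := diag3 1 1 1.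

Definition is_sym (A : Mat3) : Prop := forall i j, A i j = A j i.

Definition qform (A : Mat3) (x : Vec3) : R :=
  sum3 (fun i => sum3 (fun j => x i * A i j * x j)).

Definition is_psym (A : Mat3) : Prop :=
  is_sym A /\ forall x : Vec3, (exists i, x i <> 0) -> 0 < qform A x.

Definition is_orth (Q : Mat3) : Prop := mmul (mtr Q) Q = mid.

Definition coaxial (A B : Mat3) : Prop := mmul A B = mmul B A.

Definition cont_on_psym (T : Mat3 -> Mat3) : Prop :=
  forall U, is_psym U -> forall eps, 0 < eps -> exists delta, 0 < delta /\
    forall V, is_psym V -> (forall i j, Rabs (V i j - U i j) < delta) ->
      forall i j, Rabs (T V i j - T U i j) < eps.

(* Main.v *)
Require Import Defs.
From Stdlib Require Import Reals Lra Lia ZArith FunctionalExtensionality.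
Open Scope R_scope.

Lemma exp_cont_ed x eps : 0 < eps -> exists d, 0 < d /\
  forall y, Rabs (y - x) < d -> Rabs (exp y - exp x) < eps.
Proof.
  intros He. pose proof (derivable_continuous _ derivable_exp x) as C.
  destruct (C eps He) as [d [Hd H]]. exists d; split; [lra|].
  intros y Hy. destruct (Req_dec y x) as [->|Hne].
  - rewrite Rminus_diag, Rabs_R0; lra.
  - apply (H y). split. split; [exact I| congruence]. exact Hy.
Qed.

Section C.
Variable g : R -> R.
Hypothesis gadd : forall x y, g (x + y) = g x + g y.
Hypothesis gcont : forall x eps, 0 < eps -> exists d, 0 < d /\
  forall y, Rabs (y - x) < d -> Rabs (g y - g x) < eps.

Lemma g0 : g 0 = 0.
Proof. pose proof (gadd 0 0). rewrite Rplus_0_r in H. lra. Qed.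

Lemma gopp x : g (- x) = - g x.
Proof. pose proof (gadd x (-x)). rewrite Rplus_opp_r, g0 in H. lra. Qed.

Lemma gnat n x : g (INR n * x) = INR n * g x.
Proof.
  induction n. simpl. rewrite Rmult_0_l, g0; ring.
  rewrite S_INR. replace ((INR n + 1) * x) with (INR n * x + x) by ring.
  rewrite gadd, IHn; ring.
Qed.

Lemma gint k x : g (IZR k * x) = IZR k * g x.
Proof.
  destruct (Z.le_gt_cases 0 k).
  - rewrite <- (Z2Nat.id k H), <- INR_IZR_INZ. apply gnat.
  - assert (0 <= - k)%Z by lia.
    replace k with (- (- k))%Z by lia. rewrite opp_IZR.
    rewrite <- (Z2Nat.id (-k) H0), <- INR_IZR_INZ.
    replace (- INR (Z.to_nat (- k)) * x) with (- (INR (Z.to_nat (- k)) * x)) by ring.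
    rewrite gopp, gnat; ring.
Qed.

Lemma glin x : g x = g 1 * x.
Proof.
  set (d := g x - g 1 * x).
  assert (forall eps, 0 < eps -> Rabs d < 2 * eps).
  { intros eps He.
    destruct (gcont x eps He) as [dl [Hdl Hc]].
    set (m := Rmin dl (eps / (Rabs (g 1) + 1))).
    assert (Hm : 0 < m). { unfold m. apply Rmin_glb_lt; [lra|].
      apply Rdiv_lt_0_compat; [lra|]. pose proof (Rabs_pos (g 1)); lra. }
    destruct (archimed (/ m)) as [A1 A2].
    set (N := up (/ m)). fold N in A1, A2.
    assert (HN : 0 < IZR N). { pose proof (Rinv_0_lt_compat m Hm). lra. }
    destruct (archimed (IZR N * x)) as [B1 B2].
    set (k := up (IZR N * x)). fold k in B1, B2.
    set (r := IZR k / IZR N).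
    assert (Hr1 : 0 < r - x).
    { unfold r. apply Rmult_lt_reg_l with (IZR N); [lra|].
      field_simplify; [lra| lra]. }
    assert (Hr2 : r - x < m).
    { unfold r. apply Rmult_lt_reg_l with (IZR N); [lra|].
      replace (IZR N * (IZR k / IZR N - x)) with (IZR k - IZR N * x) by (field; lra).
      apply Rle_lt_trans with 1; [lra|].
      apply Rmult_lt_reg_l with (/ m). apply Rinv_0_lt_compat; lra.
      replace (/ m * (IZR N * m)) with (IZR N) by (field; lra). lra. }
    assert (gr : g r = g 1 * r).
    { apply Rmult_eq_reg_l with (IZR N); [|lra].
      rewrite <- gint. unfold r.
      replace (IZR N * (IZR k / IZR N)) with (IZR k * 1) by (field; lra).
      rewrite gint. field; lra. }
    assert (E1 : Rabs (g r - g x) < eps).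
    { apply Hc. rewrite Rabs_pos_eq by lra. unfold m in Hr2.
      pose proof (Rmin_l dl (eps / (Rabs (g 1) + 1))). lra. }
    assert (E2 : Rabs (g 1 * r - g 1 * x) < eps).
    { rewrite <- Rmult_minus_distr_l, Rabs_mult, (Rabs_pos_eq (r - x)) by lra.
      pose proof (Rmin_r dl (eps / (Rabs (g 1) + 1))). fold m in H.
      pose proof (Rabs_pos (g 1)).
      apply Rle_lt_trans with (Rabs (g 1) * m).
      apply Rmult_le_compat_l; lra.
      apply Rle_lt_trans with (Rabs (g 1) * (eps / (Rabs (g 1) + 1))).
      apply Rmult_le_compat_l; lra.
      apply Rmult_lt_reg_l with (Rabs (g 1) + 1); [lra|].
      field_simplify; nra. }
    unfold d. rewrite gr in E1.
    replace (g x - g 1 * x) with (-(g 1 * r - g x) + (g 1 * r - g 1 * x)) by ring.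
    eapply Rle_lt_trans. apply Rabs_triang. rewrite Rabs_Ropp. lra. }
  destruct (Req_dec d 0). unfold d in H0; lra.
  exfalso. assert (0 < Rabs d) by (apply Rabs_pos_lt; auto).
  specialize (H (Rabs d / 2) ltac:(lra)). lra.
Qed.
End C.

Definition D (a : R) : Mat3 := diag3 a (/ a) 1.

Lemma D_psym a : 0 < a -> is_psym (D a).
Proof.
  intros Ha. split.
  - intros i j; destruct i, j; reflexivity.
  - intros x [i Hi]. unfold qform, sum3, D, diag3; simpl.
    assert (0 < / a) by (apply Rinv_0_lt_compat; lra).
    assert (0 <= x i0 * x i0) by nra. assert (0 <= x i1 * x i1) by nra.
    assert (0 <= x i2 * x i2) by nra.
    destruct i.
    + assert (0 < x i0 * x i0) by (apply Rsqr_pos_lt in Hi; exact Hi). nra.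
    + assert (0 < x i1 * x i1) by (apply Rsqr_pos_lt in Hi; exact Hi). nra.
    + assert (0 < x i2 * x i2) by (apply Rsqr_pos_lt in Hi; exact Hi). nra.
Qed.

Lemma D_mul a b : 0 < a -> 0 < b -> mmul (D a) (D b) = D (a * b).
Proof.
  intros. unfold mmul, sum3, D, diag3.
  extensionality i; extensionality j; destruct i, j; simpl; try field; lra.
Qed.

Lemma D_comm a b : coaxial (D a) (D b).
Proof.
  unfold coaxial, mmul, sum3, D, diag3.
  extensionality i; extensionality j; destruct i, j; simpl; ring.
Qed.

Theorem mainTheorem5 (T : Mat3 -> Mat3)
  (HSym : forall U, is_psym U -> is_sym (T U))
  (A01 : cont_on_psym T)
  (A02 : forall U, is_psym U -> (T U = mzero <-> U = mid))
  (A03 : forall Q U, is_orth Q -> is_psym U ->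
           T (mmul (mtr Q) (mmul U Q)) = mmul (mtr Q) (mmul (T U) Q))
  (A1 : forall alpha, 0 < alpha -> exists s : R, forall U, is_psym U ->
           (U = diag3 alpha (/ alpha) 1 <-> T U = diag3 s (- s) 0))
  (A3 : forall U1 U2, is_psym U1 -> is_psym U2 -> coaxial U1 U2 ->
           T (mmul U1 U2) = madd (T U1) (T U2)) :
  exists c : R, forall alpha, 0 < alpha ->
    T (diag3 alpha (/ alpha) 1) = mscale c (diag3 (ln alpha) (- ln alpha) 0).
Proof.
  set (f := fun a => T (D a) i0 i0).
  assert (Hf : forall a, 0 < a -> T (D a) = diag3 (f a) (- f a) 0).
  { intros a Ha. destruct (A1 a Ha) as [s Hs].
    assert (E : T (D a) = diag3 s (- s) 0) by (apply (Hs (D a) (D_psym a Ha)); reflexivity).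
    unfold f; rewrite E; reflexivity. }
  set (g := fun x => f (exp x)).
  assert (gadd : forall x y, g (x + y) = g x + g y).
  { intros x y. unfold g, f. rewrite exp_plus.
    pose proof (exp_pos x); pose proof (exp_pos y).
    rewrite <- D_mul by assumption.
    rewrite A3 by (try apply D_psym; try apply D_comm; assumption). reflexivity. }
  assert (gcont : forall x eps, 0 < eps -> exists d, 0 < d /\
     forall y, Rabs (y - x) < d -> Rabs (g y - g x) < eps).
  { intros x eps He.
    destruct (A01 (D (exp x)) (D_psym _ (exp_pos x)) eps He) as [dl [Hdl Hc]].
    destruct (exp_cont_ed x dl Hdl) as [d1 [Hd1 C1]].
    destruct (exp_cont_ed (- x) dl Hdl) as [d2 [Hd2 C2]].
    exists (Rmin d1 d2). split. apply Rmin_glb_lt; lra.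
    intros y Hy. unfold g, f. apply Hc. apply D_psym, exp_pos.
    pose proof (Rmin_l d1 d2); pose proof (Rmin_r d1 d2).
    intros i j; destruct i, j; unfold D, diag3;
      try (rewrite Rminus_diag, Rabs_R0; lra).
    - apply C1; lra.
    - rewrite <- !exp_Ropp. apply C2.
      replace (- y - - x) with (- (y - x)) by ring. rewrite Rabs_Ropp; lra. }
  exists (g 1). intros a Ha.
  change (diag3 a (/ a) 1) with (D a). rewrite Hf by exact Ha.
  assert (fa : f a = g 1 * ln a).
  { rewrite <- (glin g gadd gcont). unfold g. rewrite exp_ln by exact Ha. reflexivity. }
  rewrite fa. unfold mscale, diag3.
  extensionality i; extensionality j; destruct i, j; ring.
Qed.
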